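(* Let $C>0$ and suppose the event holds that $\sum_{t=\tau_1}^{\tau_2}\mathbb E_t[M_t(g,a)]\le2\sum_{t=\tau_1}^{\tau_2}M_t(g,a)+C$ for all $g\in\mathcal G$, $a\in\mathcal A$ and $1\le\tau_1\le\tau_2\le T$. Assume $g^\star_a\in\mathcal G$ for all $a$. Then for all $a\in\mathcal A$ and $2\le k\le m\le M$: (1) $g^\star_a\in\hat{\mathcal G}_m\big(\frac{C}{2(\tau_m-1)},a\big)$; (2) for all $\beta\ge0$, $\hat{\mathcal G}_m(\beta,a)\subseteq\tilde{\mathcal G}_m\big(2\beta+\frac{C}{\tau_m-1},a\big)$; (3) for all $\beta\ge0$, $\hat{\mathcal G}_m(\beta,a)\subseteq\hat{\mathcal G}_k\big(\frac{\tau_m-1}{\tau_k-1}\beta+\frac{C}{\tau_k-1},a\big)$; (4) with $\beta_m=\frac{(M-m+1)C}{\tau_m-1}$ and $\mathcal F_m=\prod_{a}\hat{\mathcal G}_m(\beta_m,a)$ for $m\ge2$, $\mathcal F_1=\mathcal G^{\mathcal A}$: $f^\star\in\mathcal F_m$ for all $m$, and $\mathcal F_m\subseteq\mathcal F_{m-1}\subseteq\dots\subseteq\mathcal F_1$.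
   Context: Setting: $\mathcal A=\{1,\dots,K\}$, $D$ a distribution over $(x,r)\in\mathcal X\times[0,1]^K$; in rounds $t=1,\dots,T$, $(x_t,r_t)\sim D$ independently of the past, $a_t$ is chosen from $x_t$, past observations and independent randomness. $\mathcal G$ is a class of functions $\mathcal X\to[0,1]$, $g^\star_a(x)=\mathbb E[r(a)\mid x]$, $f^\star(x,a)=g^\star_a(x)$. $\mathcal J_t=\sigma((x_s,a_s,r_s)_{s<t})$, $\mathbb E_t=\mathbb E[\cdot\mid\mathcal J_t]$; $M_t(g,a)=\big((g(x_t)-r_t(a))^2-(g^\star_a(x_t)-r_t(a))^2\big)\mathbf 1\{a=a_t\}$. Epochs: $\tau_m=2^{m-1}$; $M$ is the index of the epoch (rounds $\tau_m,\dots,\tau_{m+1}-1$) containing $T$. For $m\ge2$: $\hat{\mathcal R}_m(g,a)=\frac1{\tau_m-1}\sum_{s<\tau_m}(g(x_s)-r_s(a_s))^2\mathbf 1\{a_s=a\}$, $\hat{\mathcal G}_m(\beta,a)=\{g\in\mathcal G:\hat{\mathcal R}_m(g,a)-\min_{g'\in\mathcal G}\hat{\mathcal R}_m(g',a)\le\beta\}$ (minimum assumed attained), and $\tilde{\mathcal G}_m(\beta,a)=\{g\in\mathcal G:\frac1{\tau_m-1}\sum_{t=1}^{\tau_m-1}\mathbb E_t[M_t(g,a)]\le\beta\}$. *)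

(* Defs.v *)
From mathcomp Require Import all_boot all_order all_algebra.
From mathcomp Require Import all_classical all_reals all_analysis.
Set Implicit Arguments. Unset Strict Implicit. Unset Printing Implicit Defensive.
Import Order.TTheory GRing.Theory Num.Theory.
Import numFieldNormedType.Exports.
Local Open Scope classical_set_scope.
Local Open Scope ring_scope.

Definition tau (m : nat) : nat := (2 ^ m.-1)%N.

Section Defs.
Variables (R : realType) (X : Type) (K : nat).
Variables (xs : nat -> X) (acts : nat -> 'I_K) (rs : nat -> 'I_K -> R).
Variable gstar : 'I_K -> X -> R.

Definition Mt (t : nat) (g : X -> R) (a : 'I_K) : R :=
  ((g (xs t) - rs t a) ^+ 2 - (gstar a (xs t) - rs t a) ^+ 2)
  * (a == acts t)%:R.

Definition Rhat (m : nat) (g : X -> R) (a : 'I_K) : R :=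
  (((tau m)%:R - 1)^-1) *
  \sum_(1 <= s < tau m) (g (xs s) - rs s (acts s)) ^+ 2 * (a == acts s)%:R.

Definition Ghat (G : set (X -> R)) (m : nat) (beta : R) (a : 'I_K) : set (X -> R) :=
  [set g | G g /\ Rhat m g a - inf [set Rhat m g' a | g' in G] <= beta].

(* \tilde G_m(beta,a), with Et t g a standing for E_t[M_t(g,a)]. *)
Definition Gtilde (Et : nat -> (X -> R) -> 'I_K -> R)
  (G : set (X -> R)) (m : nat) (beta : R) (a : 'I_K) : set (X -> R) :=
  [set g | G g /\
     ((tau m)%:R - 1)^-1 * \sum_(1 <= t < tau m) Et t g a <= beta].

Definition betam (Mep : nat) (C : R) (m : nat) : R :=
  ((Mep - m + 1)%:R * C) / ((tau m)%:R - 1).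

Definition Fm (G : set (X -> R)) (Mep : nat) (C : R) (m : nat)
  : set ('I_K -> X -> R) :=
  if (m <= 1)%N then [set f | forall a, G (f a)]
  else [set f | forall a, Ghat G m (betam Mep C m) a (f a)].
End Defs.

(* E_t[M_t(g,a)] computed in the model: (x_t, r_t) ~ D independent of the
   past, and conditionally on the past J_t and x_t = x the action a is
   chosen with probability pol t a x.  Hence
   E_t[M_t(g,a)] = E_{(x,r)~D}[ pol t a x ((g x - r a)^2 - (g*_a x - r a)^2) ]. *)
Definition Econd (R : realType) (d : measure_display) (Z : measurableType d)
  (D : probability Z R) (X : Type) (K : nat)
  (xof : Z -> X) (rof : Z -> 'I_K -> R) (gstar : 'I_K -> X -> R)
  (pol : nat -> 'I_K -> X -> R) (t : nat) (g : X -> R) (a : 'I_K) : R :=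
  \int[D]_(z in setT)
     (pol t a (xof z) *
      ((g (xof z) - rof z a) ^+ 2 - (gstar a (xof z) - rof z a) ^+ 2)).

(* Main.v *)
Require Import Defs.
From mathcomp Require Import all_boot all_order all_algebra.
From mathcomp Require Import all_classical all_reals all_analysis.
From mathcomp Require Import measurable_realfun ring lra zify.
Import Order.TTheory GRing.Theory Num.Theory.
Import numFieldNormedType.Exports.
Local Open Scope classical_set_scope.
Local Open Scope ring_scope.

Set Implicit Arguments. Unset Strict Implicit. Unset Printing Implicit Defensive.
Import HBNNSimple.

Section key.
Context (R : realType) (dX : measure_display) (X : measurableType dX)
  (d : measure_display) (Z : measurableType d) (D : probability Z R)
  (xof : Z -> X) (mxof : measurable_fun setT xof).

Lemma simple_step (f : {nnsfun X >-> R}) (w : Z -> R) :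
  (forall z, 0 <= w z) -> measurable_fun setT w ->
  (\int[D]_(z in setT) (f (xof z) * w z)%:E =
  \sum_(y \in range f) (y%:E * \int[D]_(z in xof @^-1` (f @^-1` [set y])) (w z)%:E))%E.
Proof.
move=> w0 mw.
under eq_integral => z _.
  rewrite (fimfunE f (xof z)) fsbig_finite //= mulr_suml -sumEFin.
  over.
rewrite /= ge0_integral_sum //; last 2 first.
- move=> y; apply/measurable_EFinP; apply: measurable_funM => //.
  apply: measurable_funM => //.
  apply: measurableT_comp => //; apply: measurableT_comp => //.
- move=> y z _; rewrite lee_fin mulr_ge0 //.
  exact: nnfun_muleindic_ge0.
rewrite fsbig_finite //=.
apply: eq_bigr => y _.
have [y0|y0] := ltP y 0.
  rewrite preimage_nnfun0 // preimage_set0 integral_set0 mule0.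
  under eq_integral do rewrite indic0 mulr0 mul0r.
  by rewrite integral0.
under eq_integral do rewrite -mulrA EFinM.
rewrite ge0_integralZl //; last first.
  by move=> z _; rewrite lee_fin mulr_ge0.
  apply/measurable_EFinP; apply: measurable_funM => //.
  apply: measurableT_comp => //.
congr (_ * _)%E.
rewrite -[in RHS](setTI (xof @^-1` _)) integral_mkcondr epatch_indic.
apply: eq_integral => z _ /=; rewrite !indicE -EFinM mulrC //.
Qed.

Lemma approx_int (h : X -> R) (mh : measurable_fun setT h) (h0 : forall x, 0 <= h x)
  (w : Z -> R) : (forall z, 0 <= w z) -> measurable_fun setT w ->
  (\int[D]_(z in setT) (h (xof z) * w z)%:E =
   limn (fun n => \int[D]_(z in setT)
     ((nnsfun_approx measurableT (iffRL (measurable_EFinP _ _) mh) n) (xof z) * w z)%:E))%E.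
Proof.
move=> w0 mw.
set hn := nnsfun_approx _ _.
rewrite -monotone_convergence //.
- apply: eq_integral => z _; apply/esym/cvg_lim => //.
  under eq_fun do rewrite EFinM.
  rewrite EFinM; apply: cvgeZr => //.
  have := @cvg_nnsfun_approx _ _ _ _ measurableT _ (iffRL (measurable_EFinP _ _) mh) _ (xof z) I.
  by apply => x _; rewrite lee_fin.
- move=> n; apply/measurable_EFinP; apply: measurable_funM => //.
  exact: measurableT_comp.
- by move=> n z _; rewrite lee_fin mulr_ge0.
- move=> z _ m n mn; rewrite lee_fin ler_wpM2r //.
  exact/lefP/nd_nnsfun_approx.
Qed.

Lemma key_eq (h : X -> R) (mh : measurable_fun setT h) (h0 : forall x, 0 <= h x)
  (w1 w2 : Z -> R) : (forall z, 0 <= w1 z) -> measurable_fun setT w1 ->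
  (forall z, 0 <= w2 z) -> measurable_fun setT w2 ->
  (forall B, measurable B -> \int[D]_(z in xof @^-1` B) (w1 z)%:E =
                             \int[D]_(z in xof @^-1` B) (w2 z)%:E)%E ->
  (\int[D]_(z in setT) (h (xof z) * w1 z)%:E =
   \int[D]_(z in setT) (h (xof z) * w2 z)%:E)%E.
Proof.
move=> w10 mw1 w20 mw2 Hb.
rewrite (approx_int mh h0 w10 mw1) (approx_int mh h0 w20 mw2).
congr (limn _); apply/funext => n; rewrite !simple_step //.
by apply: eq_fsbigr => y _; rewrite Hb.
Qed.

Lemma int_bd (f : Z -> R) : measurable_fun setT f -> (forall z, 0 <= f z <= 5) ->
  D.-integrable setT (EFin \o f).
Proof.
move=> mf bf; apply: measurable_bounded_integrable => //.
  by rewrite ltey_eq fin_num_measure.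
exists 5; split => // M M5 z _ /=; have /andP[f0 f5] := bf z; rewrite ger0_norm //; lra.
Qed.

Lemma bnd1 (a b c e : R) : 0 <= a <= 1 -> 0 <= b <= 1 -> 0 <= c <= 1 -> 0 <= e <= 1 ->
  0 <= a * ((b - c) * (b - c)) + 2 * (a * b * c) + 2 * (a * c * e) <= 5.
Proof.
move=> /andP[a0 a1] /andP[b0 b1] /andP[c0 c1] /andP[e0 e1].
have ab0 := mulr_ge0 a0 b0. have ab1 : a * b <= 1 by nra.
have ac0 := mulr_ge0 a0 c0. have ac1 : a * c <= 1 by nra.
have sq0 : 0 <= (b - c) * (b - c) by rewrite -expr2 sqr_ge0.
have sq1 : (b - c) * (b - c) <= 1 by nra.
have t1 : a * ((b - c) * (b - c)) <= 1 by nra.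
have t2 : a * b * c <= 1 by nra.
have t3 : a * c * e <= 1 by nra.
have u1 := mulr_ge0 a0 sq0. have u2 := mulr_ge0 ab0 c0. have u3 := mulr_ge0 ac0 e0.
apply/andP; split; lra.
Qed.

Lemma bnd2 (a b c e : R) : 0 <= a <= 1 -> 0 <= b <= 1 -> 0 <= c <= 1 -> 0 <= e <= 1 ->
  0 <= 2 * (a * b * e) + 2 * (a * c * c) <= 5.
Proof.
move=> /andP[a0 a1] /andP[b0 b1] /andP[c0 c1] /andP[e0 e1].
have ab0 := mulr_ge0 a0 b0. have ab1 : a * b <= 1 by nra.
have ac0 := mulr_ge0 a0 c0. have ac1 : a * c <= 1 by nra.
have t2 : a * b * e <= 1 by nra.
have t3 : a * c * c <= 1 by nra.
have u2 := mulr_ge0 ab0 e0. have u3 := mulr_ge0 ac0 c0.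
apply/andP; split; lra.
Qed.

Lemma bndall (a b c e : R) : 0 <= a <= 1 -> 0 <= b <= 1 -> 0 <= c <= 1 -> 0 <= e <= 1 ->
  [/\ 0 <= a * b * c <= 1, 0 <= a * b * e <= 1, 0 <= a * c * e <= 1,
      0 <= a * c * c <= 1 & 0 <= a * ((b - c) * (b - c)) <= 1].
Proof.
move=> /andP[a0 a1] /andP[b0 b1] /andP[c0 c1] /andP[e0 e1].
have ab0 := mulr_ge0 a0 b0. have ab1 : a * b <= 1 by nra.
have ac0 := mulr_ge0 a0 c0. have ac1 : a * c <= 1 by nra.
have sq0 : 0 <= (b - c) * (b - c) by rewrite -expr2 sqr_ge0.
have sq1 : (b - c) * (b - c) <= 1 by nra.
have := mulr_ge0 ab0 c0. have := mulr_ge0 ab0 e0. have := mulr_ge0 ac0 e0.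
have := mulr_ge0 ac0 c0. have := mulr_ge0 a0 sq0.
by move=> *; split; apply/andP; split; nra.
Qed.

Ltac mes := repeat first [apply: measurable_funD | apply: measurable_funB |
   apply: measurable_funM | apply: measurable_funN | apply: measurable_cst | (apply: measurableT_comp; [assumption|assumption]) | assumption].

Lemma Econd_ge0 (p g s : X -> R) (r : Z -> R) :
  measurable_fun setT p -> measurable_fun setT g -> measurable_fun setT s ->
  measurable_fun setT r ->
  (forall x, 0 <= p x <= 1) -> (forall x, 0 <= g x <= 1) ->
  (forall x, 0 <= s x <= 1) -> (forall z, 0 <= r z <= 1) ->
  (forall B, measurable B -> \int[D]_(z in xof @^-1` B) (r z)%:E =
                             \int[D]_(z in xof @^-1` B) (s (xof z))%:E)%E ->
  0 <= \int[D]_(z in setT) (p (xof z) * ((g (xof z) - r z) ^+ 2 - (s (xof z) - r z) ^+ 2)).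
Proof.
move=> mp mg ms mr p01 g01 s01 r01 Hb.
have mc (f : X -> R) : measurable_fun setT f -> measurable_fun setT (f \o xof).
  by move=> mf; exact: measurableT_comp.
have E1 (q : X -> R) : measurable_fun setT q -> (forall x, 0 <= q x <= 1) ->
   \int[D]_(z in setT) (q (xof z) * r z) = \int[D]_(z in setT) (q (xof z) * s (xof z)).
  move=> mq q01; rewrite /Rintegral (@key_eq q mq _ r (s \o xof)) //.
  - by move=> x; have := q01 x => /andP[].
  - by move=> z; have := r01 z => /andP[].
  - by move=> z; have := s01 (xof z) => /andP[].
  - exact: mc.
pose h1 x := p x * g x. pose h2 x := p x * s x.
pose A z := p (xof z) * ((g (xof z) - s (xof z)) * (g (xof z) - s (xof z))).
rewrite (@eq_Rintegral _ _ _ D setT (fun z => (A z + 2 * (h1 (xof z) * s (xof z)) + 2 * (h2 (xof z) * r z))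
   - (2 * (h1 (xof z) * r z) + 2 * (h2 (xof z) * s (xof z))))); last first.
  by move=> z _; rewrite /A /h1 /h2; ring.
have bd (P : R -> R -> R -> R -> R) : (forall a b c e, 0 <= a <= 1 -> 0 <= b <= 1 ->
    0 <= c <= 1 -> 0 <= e <= 1 -> 0 <= P a b c e <= 5) ->
    forall z, 0 <= P (p (xof z)) (g (xof z)) (s (xof z)) (r z) <= 5.
  by move=> HP z; apply: HP.
rewrite RintegralB //; last 2 first.
- apply: int_bd; first by rewrite /A /h1 /h2; mes.
  by move=> z; exact: bnd1 (p01 _) (g01 _) (s01 _) (r01 _).
- apply: int_bd; first by rewrite /h1 /h2 /A; mes.
  by move=> z; exact: bnd2 (p01 _) (g01 _) (s01 _) (r01 _).
have bt (f : Z -> R) : (forall z, [/\ 0 <= p (xof z) * g (xof z) * s (xof z) <= 1,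
   0 <= p (xof z) * g (xof z) * r z <= 1, 0 <= p (xof z) * s (xof z) * r z <= 1,
   0 <= p (xof z) * s (xof z) * s (xof z) <= 1 &
   0 <= p (xof z) * ((g (xof z) - s (xof z)) * (g (xof z) - s (xof z))) <= 1] ->
   0 <= f z <= 5) -> measurable_fun setT f -> D.-integrable setT (EFin \o f).
  move=> H mf; apply: int_bd => // z; apply: H.
  exact: bndall (p01 _) (g01 _) (s01 _) (r01 _).
have A0 : 0 <= \int[D]_(z in setT) A z.
  apply: Rintegral_ge0 => z _; rewrite /A.
  by have [_ _ _ _ /andP[]] := bndall (p01 (xof z)) (g01 (xof z)) (s01 (xof z)) (r01 z).
Ltac bt_tac bt A h1 h2 := apply: bt; [move=> z [/andP[? ?] /andP[? ?] /andP[? ?] /andP[? ?] /andP[? ?]];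
   rewrite /A /h1 /h2 /=; apply/andP; split; lra | rewrite /A /h1 /h2; mes].
rewrite !RintegralD //; first last; try bt_tac bt A h1 h2.
rewrite !RintegralZl //; try bt_tac bt A h1 h2.
rewrite (E1 h1) ?(E1 h2).
- lra.
- exact: measurable_funM.
- move=> x; have /andP[? ?] := p01 x; have /andP[? ?] := s01 x.
  by rewrite /h2 mulr_ge0 //= mulr_ile1.
- exact: measurable_funM.
- move=> x; have /andP[? ?] := p01 x; have /andP[? ?] := g01 x.
  by rewrite /h1 mulr_ge0 //= mulr_ile1.
Qed.

End key.

Section R.
Variable R : realType.

Lemma hA (c u C : R) : 0 < c -> 2 * u <= C -> c^-1 * u <= C / (2 * c).
Proof.
move=> c0 h; have -> : C / (2 * c) = c^-1 * (C / 2).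
  by field; rewrite gt_eqF.
rewrite ler_pM2l ?invr_gt0 //; lra.
Qed.

Lemma hD (c x y : R) : 0 < c -> c^-1 * x <= c^-1 * y -> x <= y.
Proof. by move=> c0; rewrite ler_pM2l ?invr_gt0. Qed.

Lemma hB (c E Sg Sg0 Sgs C b : R) : 0 < c -> E <= 2 * (Sg - Sgs) + C -> Sg0 <= Sgs ->
  c^-1 * Sg - c^-1 * Sg0 <= b -> c^-1 * E <= 2 * b + C / c.
Proof.
move=> c0 hE h0 hb.
have ic0 : 0 < c^-1 by rewrite invr_gt0.
have : c^-1 * E <= c^-1 * (2 * (Sg - Sg0) + C).
  by rewrite ler_pM2l //; lra.
have -> : c^-1 * (2 * (Sg - Sg0) + C) = 2 * (c^-1 * Sg - c^-1 * Sg0) + C / c by ring.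
lra.
Qed.

Lemma hC (c x y b : R) : 0 < c -> c^-1 * x - c^-1 * y <= b -> x - y <= c * b.
Proof.
move=> c0 h; have : c * (c^-1 * x - c^-1 * y) <= c * b by rewrite ler_pM2l.
have -> : c * (c^-1 * x - c^-1 * y) = x - y by field; rewrite gt_eqF.
by [].
Qed.

Lemma hE (ck cm x y b C : R) : 0 < ck -> x - y <= cm * b + C ->
  ck^-1 * x - ck^-1 * y <= cm / ck * b + C / ck.
Proof.
move=> c0 h; have -> : cm / ck * b + C / ck = ck^-1 * (cm * b + C) by ring.
by rewrite -mulrBr ler_pM2l ?invr_gt0.
Qed.

Lemma hF (c n C : R) : 0 < c -> 1 <= n -> 0 < C -> C / (2 * c) <= n * C / c.
Proof.
move=> c0 n1 C0; have -> : C / (2 * c) = c^-1 * (C / 2) by field; rewrite gt_eqF.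
rewrite [n * C / c]mulrC ler_pM2l ?invr_gt0 //; nra.
Qed.

Lemma hG (ck cm n C : R) : 0 < ck -> 0 < cm ->
  cm / ck * (n * C / cm) + C / ck = (n + 1) * C / ck.
Proof. by move=> c1 c2; field; rewrite !gt_eqF. Qed.

End R.

Unset Implicit Arguments.

Theorem mainTheorem10 (R : realType) (K : nat)
  (dX : measure_display) (X : measurableType dX)
  (d : measure_display) (Z : measurableType d) (D : probability Z R)
  (xof : Z -> X) (rof : Z -> 'I_K -> R)
  (G : set (X -> R)) (gstar : 'I_K -> X -> R)
  (pol : nat -> 'I_K -> X -> R)
  (xs : nat -> X) (acts : nat -> 'I_K) (rs : nat -> 'I_K -> R)
  (T Mep : nat) (C : R) :
  (* D : a distribution over (x, r) in X * [0,1]^K *)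
  measurable_fun setT xof ->
  (forall a, measurable_fun setT (fun z => rof z a)) ->
  (forall z a, 0 <= rof z a <= 1) ->
  (* G : a class of (measurable) functions X -> [0,1] *)
  (forall g, G g -> measurable_fun setT g /\ (forall x, 0 <= g x <= 1)) ->
  (* g*_a(x) = E[r(a) | x] *)
  (forall a, measurable_fun setT (gstar a)) ->
  (forall a (B : set X), measurable B ->
     (\int[D]_(z in xof @^-1` B) (rof z a)%:E =
      \int[D]_(z in xof @^-1` B) (gstar a (xof z))%:E)%E) ->
  (* conditional action probabilities P(a_t = a | J_t, x_t = x) *)
  (forall t a, measurable_fun setT (pol t a)) ->
  (forall t a x, 0 <= pol t a x <= 1) ->
  (forall t x, \sum_(a < K) pol t a x = 1) ->
  (* realized rewards lie in [0,1]^K *)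
  (forall t a, 0 <= rs t a <= 1) ->
  (* M is the epoch containing T *)
  (tau Mep <= T < tau Mep.+1)%N ->
  0 < C ->
  (* the minimum defining \hat G_m is attained *)
  (forall m a, (2 <= m)%N ->
     exists2 g0, G g0 & forall g', G g' -> Rhat xs acts rs m g0 a <= Rhat xs acts rs m g' a) ->
  (* the event *)
  (forall g a (t1 t2 : nat), G g -> (1 <= t1 <= t2)%N -> (t2 <= T)%N ->
     \sum_(t1 <= t < t2.+1) Econd D xof rof gstar pol t g a
       <= 2 * \sum_(t1 <= t < t2.+1) Mt xs acts rs gstar t g a + C) ->
  (forall a, G (gstar a)) ->
  (forall a (k m : nat), (2 <= k <= m)%N -> (m <= Mep)%N ->
    [/\ Ghat xs acts rs G m (C / (2 * ((tau m)%:R - 1))) a (gstar a),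
        (forall beta, 0 <= beta ->
           Ghat xs acts rs G m beta a `<=`
           Gtilde (Econd D xof rof gstar pol) G m
                  (2 * beta + C / ((tau m)%:R - 1)) a) &
        (forall beta, 0 <= beta ->
           Ghat xs acts rs G m beta a `<=`
           Ghat xs acts rs G k
             (((tau m)%:R - 1) / ((tau k)%:R - 1) * beta + C / ((tau k)%:R - 1)) a)])
  /\ (forall m, (1 <= m <= Mep)%N -> Fm xs acts rs G Mep C m gstar)
  /\ (forall m, (2 <= m <= Mep)%N ->
        Fm xs acts rs G Mep C m `<=` Fm xs acts rs G Mep C m.-1).
Proof.
move=> mxof mrof rof01 HG mgs Hcond mpol pol01 polsum rs01 HT C0 Hmin Hev Gs.
pose S n (g : X -> R) (a : 'I_K) :=
  \sum_(1 <= s < n) (g (xs s) - rs s (acts s)) ^+ 2 * (a == acts s)%:R.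
pose c m : R := (tau m)%:R - 1.
pose E t g a := Econd D xof rof gstar pol t g a.
have tau2 m : (2 <= m)%N -> (2 <= tau m)%N.
  move=> m2; case: m m2 => [//|[//|n]] _; by rewrite /tau /= expnS leq_pmulr // expn_gt0.
have taumono k m : (k <= m)%N -> (tau k <= tau m)%N.
  by move=> km; rewrite /tau leq_exp2l // -!subn1 leq_sub2r.
have tault k m : (1 <= k)%N -> (k < m)%N -> (tau k < tau m)%N.
  by move=> k1 km; rewrite /tau ltn_exp2l //; lia.
have cpos m : (2 <= m)%N -> 0 < c m.
  by move=> m2; rewrite /c subr_gt0 ltr1n; have := tau2 m m2; lia.
have tauT m : (m <= Mep)%N -> (tau m <= T)%N.
  by move: HT => /andP[h _] mM; exact: leq_trans (taumono _ _ mM) h.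
have Eg0 t g a : G g -> 0 <= E t g a.
  move=> Gg; have [mg g01] := HG g Gg; have [mgs' gs01] := HG _ (Gs a).
  exact: (Econd_ge0 mxof (mpol t a) mg mgs' (mrof a) (pol01 t a) g01 gs01
           (fun z => rof01 z a) (Hcond a)).
have sumM n g a : \sum_(1 <= t < n) Mt xs acts rs gstar t g a =
    S n g a - S n (gstar a) a.
  rewrite /S -sumrB; apply: eq_bigr => t _; rewrite /Mt.
  by case: eqP => [->|_]; rewrite ?mulr1 ?mulr0 ?subrr.
have Rh m g a : Rhat xs acts rs m g a = (c m)^-1 * S (tau m) g a by [].
have inf_eq m a g0 : G g0 ->
    (forall g', G g' -> Rhat xs acts rs m g0 a <= Rhat xs acts rs m g' a) ->
    inf [set Rhat xs acts rs m g' a | g' in G] = Rhat xs acts rs m g0 a.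
  move=> Gg0 Hg0.
  have lb : lbound [set Rhat xs acts rs m g' a | g' in G] (Rhat xs acts rs m g0 a).
    by move=> y [g' Gg' <-]; exact: Hg0.
  apply/le_anti/andP; split.
  - by apply: ge_inf; [exists (Rhat xs acts rs m g0 a) | exists g0].
  - by apply: lb_le_inf => //; exists (Rhat xs acts rs m g0 a); exists g0.
have ev m g a : (2 <= m)%N -> (m <= Mep)%N -> G g ->
    \sum_(1 <= t < tau m) E t g a <= 2 * (S (tau m) g a - S (tau m) (gstar a) a) + C.
  move=> m2 mM Gg; have t2 := tau2 m m2; have tT := tauT m mM.
  have H := Hev g a 1 (tau m).-1 Gg.
  rewrite prednK in H; last lia.
  rewrite sumM in H; apply: H; lia.
have evk k m g a : (2 <= k)%N -> (k < m)%N -> (m <= Mep)%N -> G g ->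
    \sum_(tau k <= t < tau m) E t g a <=
    2 * ((S (tau m) g a - S (tau m) (gstar a) a) -
         (S (tau k) g a - S (tau k) (gstar a) a)) + C.
  move=> k2 km mM Gg; have t2 := tau2 m (leq_trans k2 (ltnW km)).
  have tk2 := tau2 k k2; have tT := tauT m mM; have tkm := tault k m (ltnW k2) km.
  have H := Hev g a (tau k) (tau m).-1 Gg.
  rewrite prednK in H; last lia.
  have eqs : \sum_(tau k <= t < tau m) Mt xs acts rs gstar t g a =
     (S (tau m) g a - S (tau m) (gstar a) a) - (S (tau k) g a - S (tau k) (gstar a) a).
    rewrite -!sumM (@big_cat_nat _ _ _ (tau k) 1 (tau m)) /=; [ring | lia | lia].
  rewrite eqs in H; apply: H; lia.
have min_m a m : (2 <= m)%N -> (m <= Mep)%N -> exists g0, [/\ G g0,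
    inf [set Rhat xs acts rs m g' a | g' in G] = Rhat xs acts rs m g0 a,
    S (tau m) g0 a <= S (tau m) (gstar a) a &
    2 * (S (tau m) (gstar a) a - S (tau m) g0 a) <= C].
  move=> m2 mM; have [g0 Gg0 Hg0] := Hmin m a m2; exists g0; split => //.
  - exact: inf_eq.
  - by apply: (hD (cpos m m2)); exact: Hg0 (Gs a).
  - have := ev m g0 a m2 mM Gg0.
    have : 0 <= \sum_(1 <= t < tau m) E t g0 a.
      by apply: sumr_ge0 => t _; exact: Eg0.
    lra.
have part1 a m : (2 <= m)%N -> (m <= Mep)%N ->
    Ghat xs acts rs G m (C / (2 * c m)) a (gstar a).
  move=> m2 mM; have [g0 [Gg0 ie h1 h2]] := min_m a m m2 mM.
  split; first exact: Gs.
  rewrite ie !Rh -mulrBr; apply: hA (cpos m m2) _; lra.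
have part2 a m beta g : (2 <= m)%N -> (m <= Mep)%N ->
    Ghat xs acts rs G m beta a g ->
    Gtilde (Econd D xof rof gstar pol) G m (2 * beta + C / c m) a g.
  move=> m2 mM [Gg Hg]; have [g0 [Gg0 ie h1 h2]] := min_m a m m2 mM.
  split => //.
  rewrite ie !Rh in Hg.
  exact: (hB (cpos m m2) (ev m g a m2 mM Gg) h1 Hg).
have part3 a k m beta g : (2 <= k)%N -> (k <= m)%N -> (m <= Mep)%N ->
    Ghat xs acts rs G m beta a g ->
    Ghat xs acts rs G k (c m / c k * beta + C / c k) a g.
  move=> k2 km mM [Gg Hg]; split => //.
  have m2 := leq_trans k2 km.
  have [km'|km'] : (k < m)%N \/ k = m by lia.
  - have [g0m [_ iem h1m h2m]] := min_m a m m2 mM.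
    have [g0k [_ iek h1k h2k]] := min_m a k k2 (leq_trans km mM).
    rewrite iem !Rh in Hg; have Hm := hC (cpos m m2) Hg.
    have := evk k m g a k2 km' mM Gg.
    have : 0 <= \sum_(tau k <= t < tau m) E t g a.
      by apply: sumr_ge0 => t _; exact: Eg0.
    move=> s0 ek.
    rewrite iek !Rh; apply: hE (cpos k k2) _; lra.
  - subst k; rewrite divff ?gt_eqF ?cpos // mul1r.
    have : 0 <= C / c m by rewrite divr_ge0 // ?ltW ?cpos.
    lra.
have Ghat_mono m b1 b2 a g : b1 <= b2 ->
    Ghat xs acts rs G m b1 a g -> Ghat xs acts rs G m b2 a g.
  by move=> b12 [Gg Hg]; split => //; exact: le_trans Hg b12.
split; last split.
- move=> a k m /andP[k2 km] mM; split.
  + exact: part1 (leq_trans k2 km) mM.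
  + by move=> beta _ g; apply: part2 (leq_trans k2 km) mM.
  + by move=> beta _ g; apply: part3.
- move=> m /andP[m1 mM]; rewrite /Fm; case: ifP => m1' //.
  move=> a /=; have m2 : (2 <= m)%N by lia.
  apply: Ghat_mono (part1 a m m2 mM).
  rewrite /betam; apply: hF (cpos m m2) _ C0.
  by rewrite ler1n; lia.
- move=> m /andP[m2 mM] f; rewrite /Fm.
  have -> : (m <= 1)%N = false by lia.
  case: ifP => m1 /= Hf a.
    by have [] := Hf a.
  have k2 : (2 <= m.-1)%N by lia.
  have eqb : c m / c m.-1 * betam Mep C m + C / c m.-1 = betam Mep C m.-1.
    rewrite /betam hG ?cpos //.
    have -> : (Mep - m.-1 + 1 = (Mep - m + 1) + 1)%N by clear -m2 mM; lia.
    by rewrite [(_ + 1 + 1)%:R]natrD.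
  rewrite -eqb; apply: part3 (Hf a) => //; lia.
Qed.
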